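(* Let $\mathcal{C}=\{C_{\theta,t}:\theta\in\Theta,\ t\in\mathcal{T}\}$ be a class of prediction sets $C_{\theta,t}:\mathcal{X}\to 2^{\mathcal{Y}}$ with $\mathcal{T}\subset\mathbb{R}$, such that for each $\theta$ the family is nested ($t\le t'$ implies $C_{\theta,t}(x)\subseteq C_{\theta,t'}(x)$ for all $x$). Let $\ell_{\mathrm{eff}}(C;(x,y))$ be an efficiency loss that is non-decreasing in the set argument. Let $D_{\mathrm{cal}}=\{(x_i,y_i)\}_{i=1}^{n_{\mathrm{cal}}}$ be i.i.d. from a distribution of $(X,Y)$, let $\alpha\in(0,1)$, $\varepsilon_0\ge 0$, and let $(\hat\theta,\hat t)$ be a solution of $$\min_{\theta\in\Theta,t\in\mathcal{T}} \hat L_{\mathrm{eff}}(C_{\theta,t}) \quad\text{s.t.}\quad \hat L_{\mathrm{coverage}}(C_{\theta,t})\le \alpha+\varepsilon_0,$$ where $\hat L_{\mathrm{eff}}(C)=\frac1{n_{\mathrm{cal}}}\sum_i \ell_{\mathrm{eff}}(C;(x_i,y_i))$ and $\hat L_{\mathrm{coverage}}(C)=\frac1{n_{\mathrm{cal}}}\sum_i\mathbf{1}\{y_i\notin C(x_i)\}$. Let $L_{\mathrm{eff}}(C)=\mathbb{E}[\ell_{\mathrm{eff}}(C;(X,Y))]$, $L_{\mathrm{coverage}}(C)=\mathbb{P}(Y\notin C(X))$, and $$\varepsilon_{\mathrm{eff}}=\sup_{\theta\in\Theta,t\in\mathcal{T}}|\hat L_{\mathrm{eff}}(C_{\theta,t})-L_{\mathrm{eff}}(C_{\theta,t})|,\qquad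 \varepsilon_{\mathrm{coverage}}=\sup_{\theta\in\Theta,t\in\mathcal{T}}|\hat L_{\mathrm{coverage}}(C_{\theta,t})-L_{\mathrm{coverage}}(C_{\theta,t})|.$$ Then: (a) $L_{\mathrm{coverage}}(C_{\hat\theta,\hat t})\le \alpha+\varepsilon_0+\varepsilon_{\mathrm{coverage}}$; (b) if $\varepsilon_0\ge\varepsilon_{\mathrm{coverage}}$, then $$L_{\mathrm{eff}}(C_{\hat\theta,\hat t})\le \inf_{(\theta,t)\in\Theta\times\mathcal{T}:\ L_{\mathrm{coverage}}(C_{\theta,t})\le\alpha} L_{\mathrm{eff}}(C_{\theta,t})+2\varepsilon_{\mathrm{eff}}.$$
   Context: A prediction set is a map $C:\mathcal{X}\to 2^{\mathcal{Y}}$; $(X,Y)$ denotes a test example drawn from the same distribution as the calibration data. *)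

(* Defs.v *)
From HB Require Import structures.
From mathcomp Require Import all_boot all_order all_algebra.
From mathcomp Require Import all_classical all_reals all_analysis.
Set Implicit Arguments. Unset Strict Implicit. Unset Printing Implicit Defensive.
Import Order.TTheory GRing.Theory Num.Theory.
Local Open Scope classical_set_scope.
Local Open Scope ring_scope.

Section ConformalDefs.
Context {R : realType} {dX dY : measure_display}
        {X : measurableType dX} {Y : measurableType dY}.

Definition predset := X -> set Y.

Definition nested {Theta : Type} (C : Theta -> R -> predset) (Tset : set R) :=
  forall th t t', t \in Tset -> t' \in Tset -> t <= t' ->
    forall x, C th t x `<=` C th t' x.

Definition loss_monotone (l : predset -> X * Y -> R) :=
  forall (C C' : predset), (forall x, C x `<=` C' x) ->
    forall z, l C z <= l C' z.

Definition emp_eff (n : nat) (D : 'I_n -> X * Y)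
  (l : predset -> X * Y -> R) (C : predset) : R :=
  n%:R^-1 * \sum_(i < n) l C (D i).

Definition emp_cov (n : nat) (D : 'I_n -> X * Y) (C : predset) : R :=
  n%:R^-1 * \sum_(i < n) ((D i).2 \notin C (D i).1)%:R.

Definition pop_eff (P : probability (X * Y)%type R)
  (l : predset -> X * Y -> R) (C : predset) : \bar R :=
  (\int[P]_z (l C z)%:E)%E.

Definition pop_cov (P : probability (X * Y)%type R) (C : predset) : \bar R :=
  P [set z | ~ C z.1 z.2].

Definition eps_eff {Theta : Type} (C : Theta -> R -> predset) (Tset : set R)
  (n : nat) (D : 'I_n -> X * Y) (P : probability (X * Y)%type R)
  (l : predset -> X * Y -> R) : \bar R :=
  ereal_sup [set e | exists th t, Tset t /\
     e = `| (emp_eff D l (C th t))%:E - pop_eff P l (C th t) |%E].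

Definition eps_cov {Theta : Type} (C : Theta -> R -> predset) (Tset : set R)
  (n : nat) (D : 'I_n -> X * Y) (P : probability (X * Y)%type R) : \bar R :=
  ereal_sup [set e | exists th t, Tset t /\
     e = `| (emp_cov D (C th t))%:E - pop_cov P (C th t) |%E].

Definition oracle_eff {Theta : Type} (C : Theta -> R -> predset) (Tset : set R)
  (P : probability (X * Y)%type R) (l : predset -> X * Y -> R) (alpha : R) : \bar R :=
  ereal_inf [set e | exists th t, [/\ Tset t, (pop_cov P (C th t) <= alpha%:E)%E &
     e = pop_eff P l (C th t)]].

End ConformalDefs.

(* Main.v *)
Require Import Defs.
From HB Require Import structures.
From mathcomp Require Import all_boot all_order all_algebra.
From mathcomp Require Import all_classical all_reals all_analysis.
From mathcomp Require Import lra.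
Import Order.TTheory GRing.Theory Num.Theory.
Local Open Scope classical_set_scope.
Local Open Scope ring_scope.

Lemma abs_bound (R : realType) (x y : R) (E : \bar R) :
  (`|x%:E - y%:E| <= E)%E -> E = +oo%E \/ exists r, E = r%:E /\ `|x - y| <= r.
Proof.
rewrite -EFinB /=.
case: E => [r| |] H.
- by right; exists r; split => //; move: H; rewrite lee_fin.
- by left.
- by move: H; rewrite leeNy_eq.
Qed.

Theorem proposition2 (R : realType) (dX dY : measure_display)
  (X : measurableType dX) (Y : measurableType dY)
  (P : probability (X * Y)%type R)
  (Theta : Type) (Tset : set R) (C : Theta -> R -> X -> set Y)
  (l : (X -> set Y) -> X * Y -> R)
  (n : nat) (D : 'I_n -> X * Y) (alpha eps0 : R)
  (th_hat : Theta) (t_hat : R) :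
  (0 < n)%N ->
  nested C Tset ->
  loss_monotone l ->
  (forall th t, Tset t -> measurable [set z : X * Y | ~ C th t z.1 z.2]) ->
  (forall th t, Tset t -> P.-integrable setT (fun z => (l (C th t) z)%:E)) ->
  0 < alpha < 1 ->
  0 <= eps0 ->
  (* (th_hat, t_hat) solves the empirical constrained problem *)
  Tset t_hat ->
  emp_cov D (C th_hat t_hat) <= alpha + eps0 ->
  (forall th t, Tset t -> emp_cov D (C th t) <= alpha + eps0 ->
     emp_eff D l (C th_hat t_hat) <= emp_eff D l (C th t)) ->
  (* (a) *)
  (pop_cov P (C th_hat t_hat)
     <= alpha%:E + eps0%:E + eps_cov C Tset D P)%E /\
  (* (b) *)
  ((eps_cov C Tset D P <= eps0%:E)%E ->
   (pop_eff P l (C th_hat t_hat)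
     <= dual_adde (oracle_eff C Tset P l alpha) (2%:E * eps_eff C Tset D P l))%E).
Proof.
move=> n0 _ _ Hmeas Hint Ha He0 Th Hcov Hopt.
have covfin : forall th t, Tset t -> exists p : R, pop_cov P (C th t) = p%:E.
  move=> th t Tt; exists (fine (pop_cov P (C th t))).
  rewrite fineK // ge0_fin_numE ?measure_ge0 //.
  by apply: (le_lt_trans (probability_le1 P (Hmeas th t Tt))); rewrite ltry.
have efffin : forall th t, Tset t -> exists p : R, pop_eff P l (C th t) = p%:E.
  move=> th t Tt; exists (fine (pop_eff P l (C th t))).
  by rewrite fineK //; apply: (integrable_fin_num measurableT (Hint th t Tt)).
have covub : forall th t, Tset t ->
   (`|(emp_cov D (C th t))%:E - pop_cov P (C th t)| <= eps_cov C Tset D P)%E.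
  by move=> th t Tt; apply: ereal_sup_ubound; exists th, t.
have effub : forall th t, Tset t ->
   (`|(emp_eff D l (C th t))%:E - pop_eff P l (C th t)| <= eps_eff C Tset D P l)%E.
  by move=> th t Tt; apply: ereal_sup_ubound; exists th, t.
split.
  have [p Hp] := covfin th_hat _ Th.
  have := covub th_hat _ Th; rewrite Hp => /abs_bound [->|[r [-> Hr]]].
    by rewrite addey // leey.
  rewrite -!EFinD lee_fin.
  move: Hr; rewrite ler_norml => /andP[H1 H2]; lra.
move=> Hec.
have [p Hp] := efffin th_hat _ Th.
have := effub th_hat _ Th; rewrite Hp => /abs_bound [->|[E [HeE HE]]].
  rewrite mulry gtr0_sg // mul1e.
  by case: (oracle_eff _ _ _ _ _) => [r| |] /=; rewrite leey.
have key : (((p - 2 * E)%:E) <= oracle_eff C Tset P l alpha)%E.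
  apply/ereal_infP => y [th [t [Tt Hc ->]]].
  have [q Hq] := efffin th _ Tt.
  have [c Hc'] := covfin th _ Tt.
  have := effub th _ Tt; rewrite Hq HeE -EFinB /= lee_fin => HE'.
  have := le_trans (covub th _ Tt) Hec; rewrite Hc' -EFinB /= lee_fin => Hcv.
  move: Hc; rewrite Hc' lee_fin => Hc.
  have Hcon : emp_cov D (C th t) <= alpha + eps0.
    move: Hcv; rewrite ler_norml => /andP[H1 H2]; lra.
  have := Hopt _ _ Tt Hcon => Ho.
  rewrite lee_fin.
  move: HE HE'; rewrite !ler_norml => /andP[H1 H2] /andP[H3 H4]; lra.
rewrite HeE.
move: key; case: (oracle_eff C Tset P l alpha) => [w| |] /=.
- rewrite -EFinM !lee_fin => Hw; lra.
- move=> _; exact: leey.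
- by rewrite leeNy_eq.
Qed.
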